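(* Consider a source, a destination and $M \geq 1$ relays. Let $a_{sd}$ (source to destination), $a_{si}$ (source to relay $i$) and $a_{id}$ (relay $i$ to destination), $i=1,\dots,M$, be mutually independent circularly symmetric complex Gaussian $\mathcal{CN}(0,1)$ channel gains. Let the best relay $b$ be the index maximizing $\min\{|a_{si}|^2, |a_{id}|^2\}$ over $i \in \{1,\dots,M\}$, and write $a_{sb}, a_{bd}$ for its gains. Let $\rho > 0$ be the SNR, $r \in (0, 1/2)$ the multiplexing gain, and $R = r\log\rho$ the code rate. Under the (opportunistic) decode-and-forward protocol, an outage occurs as follows: if $\tfrac12\log(1+\rho|a_{sb}|^2) > R$ (the best relay decodes), outage is the event $\tfrac12\log\bigl(1+\rho(|a_{sd}|^2+|a_{bd}|^2)\bigr) \leq R$; otherwise outage is the event $\tfrac12\log(1+\rho|a_{sd}|^2) \leq R$. Let $P_e(\rho)$ be the outage probability. Then this protocol achieves the diversity-multiplexing tradeoff $d(r) = (M+1)(1-2r)$ for $r \in (0, 1/2)$, where $d(r) = -\lim_{\rho\to\infty} \frac{\log P_e(\rho)}{\log\rho}$.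
   Context: Setting: one source transmits in the first half of the time slots, all relays and the destination listen; only the selected best relay transmits in the second half (orthogonal time slots, half duplex), and the destination combines both copies. The nodes do not use channel knowledge at the physical layer. Relay selection rule: among all relays, the best relay is the one with the largest value of $\min\{|a_{si}|^2,|a_{id}|^2\}$. *)

(* Defs.v *)
From HB Require Import structures.
From mathcomp Require Import all_boot all_order all_algebra.
From mathcomp Require Import all_classical all_reals all_analysis.
Set Implicit Arguments. Unset Strict Implicit. Unset Printing Implicit Defensive.
Import Order.TTheory GRing.Theory Num.Theory.
Local Open Scope classical_set_scope.
Local Open Scope ring_scope.

(* Links of the network with M relays:
   None             = source -> destination (a_sd)
   Some (i, false)  = source -> relay i      (a_si)
   Some (i, true)   = relay i -> destination (a_id) *)
Definition link (M : nat) : finType := option ('I_M * bool).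
Definition sd_link (M : nat) : link M := None.
Definition si_link (M : nat) (i : 'I_M) : link M := Some (i, false).
Definition id_link (M : nat) (i : 'I_M) : link M := Some (i, true).

(* A complex channel gain is given by its real part (component false)
   and imaginary part (component true). Real random components are indexed
   by  link M * bool. *)
Definition comp_index (M : nat) : finType := (link M * bool)%type.

Definition gain2 {R : realType} {T : Type} (M : nat)
  (X : comp_index M -> T -> R) (l : link M) (w : T) : R :=
  X (l, false) w ^+ 2 + X (l, true) w ^+ 2.

Definition mutually_independent {d} {T : measurableType d} {R : realType}
  (I : finType) (P : probability T R) (X : I -> T -> R) : Prop :=
  forall (J : {set I}) (B : I -> set R), (forall j, measurable (B j)) ->
    P (\bigcap_(j in [set j | j \in J]) (X j @^-1` B j)) =
    (\prod_(j in J) P (X j @^-1` B j))%E.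

(* The best relay: an index maximizing min(|a_si|^2, |a_id|^2)
   (ties broken by the library's arg max, default index i0). *)
Definition best_relay {R : realType} {T : Type} (M : nat) (i0 : 'I_M)
  (X : comp_index M -> T -> R) (w : T) : 'I_M :=
  Order.arg_max i0 xpredT
    (fun i => Num.min (gain2 X (si_link i) w) (gain2 X (id_link i) w)).

(* Outage event of opportunistic decode-and-forward at SNR rho and rate
   Rt = r log rho (logarithm base is irrelevant: same base on both sides). *)
Definition outage_event {R : realType} {T : Type} (M : nat) (i0 : 'I_M)
  (X : comp_index M -> T -> R) (r rho : R) : set T :=
  [set w | let b := best_relay i0 X w in
           let Rt := r * ln rho in
           if Rt < ln (1 + rho * gain2 X (si_link b) w) / 2 then
             ln (1 + rho * (gain2 X (sd_link M) w + gain2 X (id_link b) w)) / 2 <= Rt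
           else ln (1 + rho * gain2 X (sd_link M) w) / 2 <= Rt].

Definition outage_prob {d} {T : measurableType d} {R : realType}
  (P : probability T R) (M : nat) (i0 : 'I_M)
  (X : comp_index M -> T -> R) (r rho : R) : R :=
  fine (P (outage_event i0 X r rho)).

(* Main.v *)
Require Import Defs.
From HB Require Import structures.
From mathcomp Require Import all_boot all_order all_algebra.
From mathcomp Require Import all_classical all_reals all_analysis.
From mathcomp Require Import measurable_realfun.
From mathcomp Require Import ring lra.
Import Order.TTheory GRing.Theory Num.Theory.
Local Open Scope classical_set_scope.
Local Open Scope ring_scope.

Lemma leb_itv (R : realType) (a : R) : 0 < a ->
  lebesgue_measure [set` `[-a, a]%R] = (a *+ 2)%:E.
Proof.
move=> a0; rewrite lebesgue_measure_itv/= lte_fin gtrN//= -EFinD opprK mulr2n.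
by [].
Qed.

Lemma normal_itv_bounds (R : realType) (s : R) : s != 0 ->
  exists c1 c2 : R, 0 < c1 /\ 0 < c2 /\ forall a : R, 0 < a -> a <= 1 ->
   ((c1 * a)%:E <= normal_prob 0 s [set` `[-a, a]%R] /\
    normal_prob 0 s [set` `[-a, a]%R] <= (c2 * a)%:E)%E.
Proof.
move=> s0.
have pk := normal_peak_gt0 s0.
exists ((normal_peak s * expR (- 1 / (s ^+ 2 *+ 2))) *+ 2), (normal_peak s *+ 2).
split; first by rewrite mulrn_wgt0// mulr_gt0// expR_gt0.
split; first by rewrite mulrn_wgt0.
move=> a a0 a1; split.
- apply: (@le_trans _ _ (\int[lebesgue_measure]_(x in [set` `[-a, a]%R])
     (cst (normal_peak s * expR (- 1 / (s ^+ 2 *+ 2)))%:E x))%E).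
    rewrite integral_cst//.
    rewrite [X in (_ * X)%E](_ : _ = (a *+ 2)%:E); last exact: leb_itv.
    by rewrite -EFinM lee_fin mulrnAl mulrnAr.
  apply: ge0_le_integral => //.
  + by move=> x _; rewrite lee_fin mulr_ge0 ?expR_ge0// ltW.
  + apply/measurable_realfun.measurable_EFinP; apply: measurable_funTS.
    exact: measurable_normal_pdf.
  + move=> x /=; rewrite in_itv/= => /andP[xa ax].
    rewrite lee_fin normal_pdfE// /normal_fun.
    rewrite ler_pM2l// ler_expR subr0 !mulNr lerN2 ler_pM2r; last first.
      by rewrite invr_gt0 mulrn_wgt0// exprn_even_gt0.
    have : `|x| <= 1 by rewrite ler_norml; apply/andP; split; [rewrite lerNl; apply: le_trans a1; rewrite lerNl|apply: le_trans a1].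
    by move=> h; rewrite -real_normK ?num_real// expr_le1.
- apply: (@le_trans _ _ (\int[lebesgue_measure]_(x in [set` `[-a, a]%R])
     (cst (normal_peak s)%:E x))%E); last first.
    rewrite integral_cst//.
    rewrite [X in (_ * X)%E](_ : _ = (a *+ 2)%:E); last exact: leb_itv.
    by rewrite -EFinM lee_fin mulrnAl mulrnAr.
  apply: ge0_le_integral => //.
  + by move=> x _; rewrite lee_fin normal_pdf_ge0.
  + apply/measurable_realfun.measurable_EFinP; apply: measurable_funTS.
    exact: measurable_normal_pdf.
  + by move=> x _; rewrite lee_fin normal_pdf_ub.
Qed.

Section Main.
Variables (R : realType) (d : measure_display) (T : measurableType d)
  (P : probability T R) (M : nat) (hM : (0 < M)%N)
  (X : comp_index M -> T -> R)
  (hXmeas : forall j, measurable_fun setT (X j))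
  (hXnormal : forall j (B : set R), measurable B ->
     P (X j @^-1` B) = normal_prob 0 (Num.sqrt (2^-1)) B)
  (hXindep : mutually_independent P X).

Let sig : R := Num.sqrt (2^-1).

Definition phi (f : {ffun 'I_M -> bool}) (x : option 'I_M * bool) : comp_index M :=
  (omap (fun i => (i, f i)) x.1, x.2).

Lemma phi_inj f : injective (phi f).
Proof.
move=> [[i|] c] [[i'|] c'] //= [] //.
- by move=> -> _ ->.
- by move=> ->.
Qed.

Definition Jf (f : {ffun 'I_M -> bool}) : {set comp_index M} := [set phi f x | x in [set: option (ordinal M) * bool]%SET].

Definition Sf (f : {ffun 'I_M -> bool}) (a : R) : set T :=
  \bigcap_(j in [set j | j \in Jf f]) (X j @^-1` [set` `[-a, a]%R]).

Lemma card_Jf f : #|Jf f| = (M.+1 * 2)%N.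
Proof.
rewrite /Jf card_imset; last exact: phi_inj.
by rewrite cardsT card_prod card_option card_ord card_bool.
Qed.

Lemma PSf f a : P (Sf f a) =
  ((fine (normal_prob 0 sig [set` `[-a, a]%R])) ^+ (M.+1 * 2))%:E.
Proof.
rewrite /Sf (hXindep (Jf f) (fun _ => [set` `[-a, a]%R])) //.
under eq_bigr do rewrite hXnormal //.
rewrite -(@fineK _ (normal_prob 0 sig _)); last exact: fin_num_measure.
rewrite (eq_bigr (fun _ => (fine (normal_prob 0 sig [set` `[-a, a]%R]))%:E)) //.
by rewrite prodEFin prodr_const card_Jf.
Qed.

Lemma measurable_Sf f a : measurable (Sf f a).
Proof.
rewrite /Sf; apply: fin_bigcap_measurable; first exact: finite_finset. move=> j _.
by rewrite -[X j @^-1` _]setTI; apply: hXmeas.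
Qed.


Lemma meas_le (f g : T -> R) : measurable_fun setT f -> measurable_fun setT g ->
  measurable [set w | f w <= g w].
Proof.
move=> mf mg.
rewrite (_ : [set w | _] = (g \- f) @^-1` [set` `[0, +oo[%R]); last first.
  by apply/seteqP; split=> w /=; rewrite in_itv/= andbT subr_ge0.
by rewrite -[X in measurable X]setTI; apply: measurable_funB.
Qed.

Lemma meas_lt (f g : T -> R) : measurable_fun setT f -> measurable_fun setT g ->
  measurable [set w | f w < g w].
Proof.
move=> mf mg.
rewrite (_ : [set w | _] = (g \- f) @^-1` [set` `]0, +oo[%R]); last first.
  by apply/seteqP; split=> w /=; rewrite in_itv/= andbT subr_gt0.
by rewrite -[X in measurable X]setTI; apply: measurable_funB.
Qed.

Lemma mgain l : measurable_fun setT (gain2 X l).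
Proof.
by apply: measurable_funD; apply: measurable_funX; apply: hXmeas.
Qed.

Lemma meas_seq (I : finType) (i0 k : I) (Q : T -> pred I) (s : seq I) :
  (forall i, measurable [set w | Q w i]) ->
  measurable [set w | odflt i0 (ohead [seq x <- s | Q w x]) = k].
Proof.
move=> mQ; elim: s => [|x s IH] /=.
  have [->|ne] := eqVneq i0 k.
    by rewrite (_ : [set w | _] = setT) //; apply/seteqP; split.
  rewrite (_ : [set w | _] = set0) //; apply/seteqP; split=> w //=.
  by move=> e; rewrite e eqxx in ne.
rewrite (_ : [set w | _] = ([set w | Q w x] `&` [set _ | x = k]) `|`
   (~` [set w | Q w x] `&` [set w | odflt i0 (ohead [seq x <- s | Q w x]) = k])).
  apply: measurableU; apply: measurableI => //.
  - by have [->|ne] := eqVneq x k; [rewrite (_ : [set _ | _] = setT) //; apply/seteqP; split|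
      rewrite (_ : [set _ | _] = set0) //; apply/seteqP; split=> w //= e; rewrite e eqxx in ne].
  - exact: measurableC.
apply/seteqP; split=> w /=; case: (Q w x) => /=.
- by move=> ->; left.
- by move=> h; right.
- by case=> -[].
- by case=> -[].
Qed.

Lemma meas_best (i0 k : 'I_M) : measurable [set w | best_relay i0 X w = k].
Proof.
pose F w i := Num.min (gain2 X (si_link i) w) (gain2 X (id_link i) w).
have mF i : measurable_fun setT (fun w => F w i).
  by apply: measurable_minr; apply: mgain.
have := @meas_seq _ i0 k (fun w => [pred i | [forall j, (F w j <= F w i)%O]])
  (Finite.enum _).
apply.
move=> i /=.
rewrite (_ : [set w | _] = \bigcap_(j in setT) [set w | F w j <= F w i]).
  apply: fin_bigcap_measurable; first exact: finite_finset.
  by move=> j _; apply: meas_le.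
apply/seteqP; split=> w /=.
  by move/forallP => h j _; apply: h.
by move=> h; apply/forallP => j; apply: h.
Qed.


Lemma mlnf (rho : R) (f : T -> R) : measurable_fun setT f ->
  measurable_fun setT (fun w => ln (1 + rho * f w) / 2).
Proof.
move=> mf; apply: measurable_funM => //.
apply: measurableT_comp; first exact: measurable_ln.
apply: measurable_funD => //; exact: measurable_funM.
Qed.

Lemma meas_outage (i0 : 'I_M) (r rho : R) : measurable (outage_event i0 X r rho).
Proof.
pose Ok k := ([set w | r * ln rho < ln (1 + rho * gain2 X (si_link k) w) / 2] `&`
   [set w | ln (1 + rho * (gain2 X (sd_link M) w + gain2 X (id_link k) w)) / 2 <= r * ln rho]) `|`
   (~` [set w | r * ln rho < ln (1 + rho * gain2 X (si_link k) w) / 2] `&`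
   [set w | ln (1 + rho * gain2 X (sd_link M) w) / 2 <= r * ln rho]).
rewrite (_ : outage_event _ _ _ _ = \bigcup_(k in setT) ([set w | best_relay i0 X w = k] `&` Ok k)).
  apply: fin_bigcup_measurable; first exact: finite_finset.
  move=> k _; apply: measurableI; first exact: meas_best.
  apply: measurableU; apply: measurableI.
  - by apply: meas_lt => //; apply: mlnf; apply: mgain.
  - apply: meas_le => //; apply: mlnf.
    by apply: measurable_funD; apply: mgain.
  - by apply: measurableC; apply: meas_lt => //; apply: mlnf; apply: mgain.
  - by apply: meas_le => //; apply: mlnf; apply: mgain.
apply/seteqP; split=> w /=.
  move=> h; exists (best_relay i0 X w) => //; split => //.
  move: h; rewrite /Ok /outage_event /=; case: ifP => H h; [left|right]; split => //.
move=> [k _ [/= Hk]]; subst k; rewrite /Ok /outage_event /=; case=> [[H1 H2]|[H1 H2]]; case: ifP => // H.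
- by rewrite H in H1.
Qed.


Section Rho.
Variables (r rho : R).
Hypotheses (hr0 : 0 < r) (hr1 : r < 2^-1) (hrho : 1 < rho).
Let u : R := expR ((r * 2 - 1) * ln rho).
Hypothesis hE : 2 <= rho * u.

Lemma hr2 : r * 2 < 1.
Proof. by move: hr1; rewrite -div1r ltr_pdivlMr. Qed.

Lemma rho_gt0 : 0 < rho. Proof. by apply: lt_trans hrho. Qed.

Lemma rhou : rho * u = expR (r * ln rho * 2).
Proof.
rewrite /u -{1}(lnK rho_gt0) -expRD; congr expR; ring.
Qed.

Lemma u_gt0 : 0 < u. Proof. exact: expR_gt0. Qed.

Lemma u_le1 : u <= 1.
Proof.
rewrite /u -[leRHS]expR0 ler_expR nmulr_rle0; last by have := hr2; lra.
by rewrite ln_ge0// ltW.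
Qed.

Lemma key_le g : 0 <= g -> ln (1 + rho * g) / 2 <= r * ln rho -> g <= u.
Proof.
move=> g0; rewrite ler_pdivrMr// => h.
have p : 0 < 1 + rho * g by rewrite ltr_pwDl// mulr_ge0// ltW// rho_gt0.
have : 1 + rho * g <= rho * u by rewrite rhou -(lnK p) ler_expR.
move=> h2; have h3 : rho * g <= rho * u by lra.
by rewrite -(ler_pM2l rho_gt0).
Qed.

Lemma key_nlt g : 0 <= g -> ~~ (r * ln rho < ln (1 + rho * g) / 2) -> g <= u.
Proof. by move=> g0; rewrite -leNgt; apply: key_le. Qed.

Lemma key_ge g : 0 <= g -> g <= u / 2 -> ln (1 + rho * g) / 2 <= r * ln rho.
Proof.
move=> g0 gu; rewrite ler_pdivrMr//.
have p : 0 < 1 + rho * g by rewrite ltr_pwDl// mulr_ge0// ltW// rho_gt0.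
rewrite -[leRHS](expRK) ler_ln ?posrE ?expR_gt0// -rhou.
have : rho * g <= rho * (u / 2) by rewrite ler_pM2l// rho_gt0.
move: hE; lra.
Qed.


Variables (c1 c2 : R) (hc1 : 0 < c1) (hc2 : 0 < c2)
  (hc : forall a : R, 0 < a -> a <= 1 ->
   ((c1 * a)%:E <= normal_prob 0 sig [set` `[-a, a]%R] /\
    normal_prob 0 sig [set` `[-a, a]%R] <= (c2 * a)%:E)%E).
Variable i0 : 'I_M.

Lemma sq_itv (a x : R) : 0 <= a -> x \in `[-a, a] -> x ^+ 2 <= a ^+ 2.
Proof.
move=> a0; rewrite in_itv/= -ler_norml => h.
by rewrite -real_normK ?num_real// lerXn2r// nnegrE.
Qed.

Lemma itv_sq (b x y : R) : 0 <= b -> x ^+ 2 + y ^+ 2 <= b ->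
  x \in `[- Num.sqrt b, Num.sqrt b] .
Proof.
move=> b0 h; rewrite in_itv/= -ler_norml -sqrtr_sqr ler_sqrt//.
by apply: le_trans h; rewrite lerDl sqr_ge0.
Qed.

Lemma fineq a : 0 < a -> a <= 1 ->
  c1 * a <= fine (normal_prob 0 sig [set` `[-a, a]%R]) <= c2 * a.
Proof.
move=> a0 a1; have [h1 h2] := hc a a0 a1.
rewrite -(@fineK _ (normal_prob 0 sig _)) in h1 h2; last exact: fin_num_measure.
by rewrite -!lee_fin h1 h2.
Qed.

Lemma lower_bound :
  (((c1 ^+ 2 / 8 * u) ^+ M.+1)%:E <= P (outage_event i0 X r rho))%E.
Proof.
have u0 := u_gt0; have u1 := u_le1.
pose a := Num.sqrt (u / 8).
have a0 : 0 < a by rewrite sqrtr_gt0 divr_gt0.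
have a1 : a <= 1 by rewrite -sqrtr1 ler_sqrt// ler_pdivrMr//; lra.
have a2 : a ^+ 2 = u / 8 by rewrite sqr_sqrtr// divr_ge0// ltW.
pose f1 : {ffun 'I_M -> bool} := [ffun=> true].
apply: (@le_trans _ _ (P (Sf f1 a))); last first.
  apply: le_measure; rewrite ?inE; [exact: measurable_Sf|exact: meas_outage|].
  move=> w Sw.
  have Hj : forall l c, l = sd_link M \/ (exists i, l = id_link i) ->
      X (l, c) w ^+ 2 <= u / 8.
    move=> l c hl; rewrite -a2; apply: sq_itv; first exact: ltW.
    have : (l, c) \in Jf f1.
      case: hl => [->|[i ->]].
        by apply/imsetP; exists (None, c); rewrite ?in_setT.
      by apply/imsetP; exists (Some i, c); rewrite ?in_setT // /phi /= ffunE.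
    by move=> hJ; apply: (Sw (l, c)); rewrite /=.
  have hsd : gain2 X (sd_link M) w <= u / 4.
    rewrite /gain2; have := Hj (sd_link M) false (or_introl erefl).
    have := Hj (sd_link M) true (or_introl erefl); lra.
  have hid : forall i, gain2 X (id_link i) w <= u / 4.
    move=> i; rewrite /gain2; have := Hj (id_link i) false (or_intror (ex_intro _ i erefl)).
    have := Hj (id_link i) true (or_intror (ex_intro _ i erefl)); lra.
  have g0 : forall l, 0 <= gain2 X l w by move=> l; rewrite addr_ge0// sqr_ge0.
  rewrite /outage_event /=; case: ifP => _.
    apply: key_ge; first by rewrite addr_ge0.
    by have := hsd; have := hid (best_relay i0 X w); lra.
  by apply: key_ge => //; move: hsd; lra.
rewrite PSf lee_fin.
have /andP[q1 _] := fineq a a0 a1.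
rewrite mulnC exprM.
have -> : c1 ^+ 2 / 8 * u = (c1 * a) ^+ 2 by rewrite exprMn a2; field.
have ca0 : 0 <= c1 * a by rewrite mulr_ge0 ?ltW.
have q0 : 0 <= fine (normal_prob 0 sig [set` `[-a, a]%R]) by apply: le_trans q1.
by apply: lerXn2r; rewrite ?nnegrE ?exprn_ge0 // lerXn2r ?nnegrE.
Qed.


Lemma upper_bound : (P (outage_event i0 X r rho) <=
  ((size (enum {ffun 'I_M -> bool}))%:R * (c2 ^+ 2 * u) ^+ M.+1)%:E)%E.
Proof.
have u0 := u_gt0; have u1 := u_le1.
pose a := Num.sqrt u.
have a0 : 0 < a by rewrite sqrtr_gt0.
have a1 : a <= 1 by rewrite -sqrtr1 ler_sqrt.
have a2 : a ^+ 2 = u by rewrite sqr_sqrtr// ltW.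
pose s := enum {ffun 'I_M -> bool}.
pose f0 : {ffun 'I_M -> bool} := [ffun=> true].
pose F k := Sf (nth f0 s k) a.
have := @content_subadditive _ _ _ P (outage_event i0 X r rho) F (size s).
move=> /(_ _ (meas_outage i0 r rho)) H.
apply: le_trans (H _ _) _.
- by move=> k _; apply: measurable_Sf.
- move=> w Ow; rewrite -bigcup_mkord.
  have g0 l : 0 <= gain2 X l w by rewrite addr_ge0// sqr_ge0.
  have [hsd hb] : gain2 X (sd_link M) w <= u /\
     Num.min (gain2 X (si_link (best_relay i0 X w)) w)
             (gain2 X (id_link (best_relay i0 X w)) w) <= u.
    move: Ow; rewrite /outage_event /=; case: ifP => Hc h.
      have := key_le _ (addr_ge0 (g0 _) (g0 _)) h => hs.
      have := g0 (id_link (best_relay i0 X w)).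
      have := g0 (sd_link M) => ? ?.
      split; first lra.
      by rewrite ge_min; apply/orP; right; lra.
    have := key_nlt _ (g0 _) (negbT Hc) => hs.
    split; first exact: key_le _ (g0 _) h.
    by rewrite ge_min hs.
  have hmax : forall i, Num.min (gain2 X (si_link i) w) (gain2 X (id_link i) w) <=
     Num.min (gain2 X (si_link (best_relay i0 X w)) w)
             (gain2 X (id_link (best_relay i0 X w)) w).
    by rewrite /best_relay; case: arg_maxP => // j _ Hj i; apply: Hj.
  have comp : forall l c, gain2 X l w <= u -> X (l, c) w \in `[- a, a].
    move=> l c h; apply: (itv_sq u _ (X (l, ~~ c) w)); first exact: ltW.
    by case: c; rewrite /gain2 in h => //=; rewrite addrC.
  pose fw : {ffun 'I_M -> bool} := [ffun i => ~~ (gain2 X (si_link i) w <= u)].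
  exists (index fw s); first by rewrite /= index_mem mem_enum.
  rewrite /F nth_index ?mem_enum //.
  move=> j /= /imsetP; case=> x _ ->; case: x => o c; rewrite /phi /=.
  case: o => [i|] /=; last exact: comp.
  apply: comp; rewrite ffunE; case hs: (gain2 X (si_link i) w <= u) => //=.
  by have := le_trans (hmax i) hb; rewrite ge_min hs /=.
rewrite (eq_bigr (fun _ => ((fine (normal_prob 0 sig [set` `[-a, a]%R])) ^+ (M.+1 * 2))%:E)); last first.
  by move=> k _; exact: PSf.
rewrite sumEFin lee_fin sumr_const card_ord -[X in X <= _]mulr_natl.
apply: ler_wpM2l => //.
have /andP[_ q1] := fineq a a0 a1.
have q0 : 0 <= fine (normal_prob 0 sig [set` `[-a, a]%R]).
  by rewrite fine_ge0// measure_ge0.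
rewrite mulnC exprM.
have -> : c2 ^+ 2 * u = (c2 * a) ^+ 2 by rewrite exprMn a2.
have ca0 : 0 <= c2 * a by rewrite mulr_ge0 ?ltW.
by apply: lerXn2r; rewrite ?nnegrE ?exprn_ge0 // lerXn2r ?nnegrE.
Qed.

End Rho.


Lemma main_cvg (r : R) (hr0 : 0 < r) (hr1 : r < 2^-1) :
  (fun rho : R => ln (outage_prob P (Ordinal hM) X r rho) / ln rho)
    @ +oo --> - ((M.+1)%:R * (1 - 2 * r)).
Proof.
have sig0 : sig != 0 by rewrite gt_eqF// sqrtr_gt0 invr_gt0.
have [c1 [c2 [hc1 [hc2 hc]]]] := @normal_itv_bounds R sig sig0.
pose i0 := Ordinal hM.
pose n := size (enum {ffun 'I_M -> bool}).
have n0 : (0 < n)%N.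
  by rewrite /n lt0n size_eq0; apply/eqP => h; have := mem_enum {ffun 'I_M -> bool} [ffun=> true]; rewrite h.
pose A1 := c1 ^+ 2 / 8. pose A2 := c2 ^+ 2.
have A10 : 0 < A1 by rewrite divr_gt0// exprn_gt0.
have A20 : 0 < A2 by rewrite exprn_gt0.
pose m : R := M.+1%:R.
pose K1 := m * ln A1.
pose K2 := ln (n%:R : R) + m * ln A2.
pose C := `|K1| + `|K2|.
have C0 : 0 <= C by rewrite addr_ge0.
pose L := - (m * (1 - 2 * r)).
apply/cvgrPdist_le => e e0.
have r20 : 0 < r * 2 by rewrite mulr_gt0.
exists (expR (1 + ln 2 / (r * 2) + C / e)); split; first exact: num_real.
move=> rho hrho.
have rho0 : 0 < rho by apply: lt_trans hrho; rewrite expR_gt0.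
have ln2 : 0 <= ln (2 : R) by rewrite ln_ge0// ler1n.
have hl : 1 + ln 2 / (r * 2) + C / e < ln rho.
  by rewrite -ltr_expR lnK// posrE.
have t1 : 0 <= ln 2 / (r * 2) by rewrite divr_ge0// ltW.
have t2 : 0 <= C / e by rewrite divr_ge0// ltW.
have l1 : 1 < ln rho by lra.
have hrho1 : 1 < rho by rewrite -[rho]lnK ?posrE// -expR0 ltr_expR; lra.
pose u := expR ((r * 2 - 1) * ln rho).
have u0 : 0 < u by apply: expR_gt0.
have hE : 2 <= rho * u.
  rewrite (rhou r rho hrho1) -[X in X <= _]lnK ?posrE// ler_expR.
  have : ln 2 / (r * 2) <= ln rho by lra.
  rewrite ler_pdivrMr// => h; rewrite (_ : r * ln rho * 2 = ln rho * (r * 2)) //; ring.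
have lo := lower_bound r rho hr1 hrho1 hE c1 c2 hc1 hc i0.
have up := upper_bound r rho hr1 hrho1 c1 c2 hc2 hc i0.
rewrite /outage_prob.
set pO := P (outage_event i0 X r rho) in lo up *.
have finO : pO \is a fin_num by apply: fin_num_measure; apply: meas_outage.
rewrite -(fineK finO) lee_fin in lo up.
set p := fine pO in lo up *.
have Au1 : 0 < A1 * u by rewrite mulr_gt0.
have Au2 : 0 < A2 * u by rewrite mulr_gt0.
have p0 : 0 < p by apply: lt_le_trans lo; rewrite exprn_gt0.
have lnu : ln u = (r * 2 - 1) * ln rho by rewrite expRK.
have hlo : L * ln rho + K1 <= ln p.
  have -> : L * ln rho + K1 = ln ((A1 * u) ^+ M.+1).
    rewrite lnXn// lnM ?posrE// lnu -mulr_natl /L /K1 /m; ring.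
  by rewrite ler_ln ?posrE// exprn_gt0.
have hup : ln p <= L * ln rho + K2.
  have -> : L * ln rho + K2 = ln (n%:R * (A2 * u) ^+ M.+1).
    rewrite lnM ?posrE ?ltr0n ?exprn_gt0// lnXn// lnM ?posrE// lnu -[(_ + _) *+ _]mulr_natl /L /K2 /m; ring.
  by rewrite ler_ln ?posrE// ?mulr_gt0 ?ltr0n ?exprn_gt0.
have lr0 : 0 < ln rho by lra.
pose D := ln p - L * ln rho.
have -> : ln p / ln rho = L + D / ln rho by rewrite /D; field; rewrite gt_eqF.
rewrite opprD addrA subrr add0r normrN normrM normfV (gtr0_norm lr0).
rewrite ler_pdivrMr//.
have hD : `|D| <= C.
  rewrite ler_norml; have := ler_norm K2; have := ler_norm (- K1); rewrite normrN.
  have := normr_ge0 K1; have := normr_ge0 K2.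
  rewrite /D /C => ? ? ? ?; apply/andP; split; lra.
apply: le_trans hD _.
have : C / e <= ln rho by lra.
by rewrite ler_pdivrMr// mulrC.
Qed.

End Main.

Theorem theorem3 (R : realType) (d : measure_display) (T : measurableType d)
  (P : probability T R) (M : nat) (hM : (0 < M)%N)
  (X : comp_index M -> T -> R)
  (hXmeas : forall j, measurable_fun setT (X j))
  (hXnormal : forall j (B : set R), measurable B ->
     P (X j @^-1` B) = normal_prob 0 (Num.sqrt (2^-1)) B)
  (hXindep : mutually_independent P X)
  (r : R) (hr0 : 0 < r) (hr1 : r < 2^-1) :
  (fun rho : R => ln (outage_prob P (Ordinal hM) X r rho) / ln rho)
    @ +oo --> - ((M.+1)%:R * (1 - 2 * r)).
Proof.
exact: (main_cvg R d T P M hM X hXmeas hXnormal hXindep r hr0 hr1).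
Qed.
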